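(* Let $u_{x,y}$ and $v_{x,y}$ be matrices of generalized kernels and put $\hat u_{x,y}=u_{x,y}+v_{x,y}$. Assume both $u$ and $\hat u$ are quasidefinite, and denote by $P^{[i]}_n,H_n,K_n$ the objects associated with $u$ and by $\hat P^{[i]}_n,\hat H_n$ those associated with $\hat u$. Then for every $n\ge0$ (with $K_{-1}:=0$) and every $z$, $$\hat P^{[1]}_n(z)=P^{[1]}_n(z)-\big\langle \hat P^{[1]}_n(x),(K_{n-1}(z,y))^\top\big\rangle_v,\qquad (\hat P^{[2]}_n(z))^\top=(P^{[2]}_n(z))^\top-\big\langle K_{n-1}(x,z),\hat P^{[2]}_n(y)\big\rangle_v,$$ and $$\hat H_n=H_n+\langle \hat P^{[1]}_n(x),P^{[2]}_n(y)\rangle_v=H_n+\langle P^{[1]}_n(x),\hat P^{[2]}_n(y)\rangle_v .$$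
   Context: Fix an integer $p\ge1$; ${}^\top$ denotes transpose. A matrix of generalized kernels $w_{x,y}$ is a $p\times p$ matrix of continuous linear functionals on $\mathbb C[x,y]$, defining the sesquilinear form $\langle P(x),Q(y)\rangle_w\in\mathbb C^{p\times p}$ for $P,Q\in\mathbb C^{p\times p}[x]$ with entries $(\langle P,Q\rangle_w)_{i,j}=\sum_{k,l=1}^p\langle (w_{x,y})_{k,l},P_{i,k}(x)Q_{j,l}(y)\rangle$; it is left-linear in the first argument and satisfies $\langle P,AQ\rangle_w=\langle P,Q\rangle_wA^\top$; forms add: $\langle\cdot,\cdot\rangle_{u+v}=\langle\cdot,\cdot\rangle_u+\langle\cdot,\cdot\rangle_v$. When an argument depends polynomially on an extra parameter $z$, the form is applied with $z$ fixed. Gram matrix $G_{k,l}=\langle I_px^k,I_py^l\rangle_w$; $w$ is quasidefinite if all leading block truncations $(G_{i,j})_{0\le i,j\le k-1}$ are nonsingular. Then $G=S_1^{-1}HS_2^{-\top}$ uniquely with $S_1,S_2$ block lower unitriangular and $H=\operatorname{diag}(H_0,H_1,\dots)$; the monic matrix polynomials $P^{[i]}_n(x)=\sum_{k=0}^n(S_i)_{n,k}x^k$ satisfy $\langle P^{[1]}_n(x),P^{[2]}_m(y)\rangle_w=\delta_{n,m}H_n$. The Christoffel--Darboux kernel is $K_n(x,y)=\sum_{k=0}^n(P^{[2]}_k(y))^\top H_k^{-1}P^{[1]}_k(x)$. *)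

(* Defs.v *)
From HB Require Import structures.
From mathcomp Require Import all_boot all_order all_algebra.
From mathcomp Require Import reals complex.
Set Implicit Arguments. Unset Strict Implicit. Unset Printing Implicit Defensive.
Import Order.TTheory GRing.Theory Num.Theory.
Local Open Scope ring_scope.

Section Defs.
Variables (R : realType) (p : nat).
Local Notation C := (R[i]).

(* A p x p matrix of generalized kernels w_{x,y} (each entry a linear
   functional on C[x,y]) is represented by its moments:
     kernel_moments w a b i j = < (w_{x,y})_{i,j} , x^a y^b >.
   A linear functional on C[x,y] is the same as its (arbitrary) moment
   sequence, since the monomials form a basis. *)
Definition gkernel := nat -> nat -> 'M[C]_p.

Definition gkernel_add (u v : gkernel) : gkernel := fun a b => u a b + v a b.

Definition mpoly := 'M[{poly C}]_p.

Definition sform (w : gkernel) (P Q : mpoly) : 'M[C]_p :=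
  \matrix_(i, j) \sum_(k < p) \sum_(l < p)
     \sum_(a < size (P i k)) \sum_(b < size (Q j l))
        (P i k)`_a * (Q j l)`_b * w a b k l.

(* block Gram matrix truncation (G_{i,j})_{0 <= i,j <= k-1}, of size k*p,
   where G_{a,b} = < I_p x^a, I_p y^b >_w, so (G_{a,b})_{i,j} = w a b i j *)
Definition gram_trunc (w : gkernel) (k : nat) :
    'M[C]_(\sum_(a < k) p, \sum_(b < k) p) :=
  \mxblock_(a < k, b < k) w a b.

Definition quasidefinite (w : gkernel) : Prop :=
  forall k : nat, \det (gram_trunc w k) != 0.

Definition monic_mpoly (n : nat) (P : mpoly) : Prop :=
  forall i j : 'I_p, leq (size (P i j - (i == j)%:R *: 'X^n)) n.

(* P1, P2, H are the monic biorthogonal matrix polynomials and the H_n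
   associated with w (i.e. P^{[i]}_n(x) = sum_k (S_i)_{n,k} x^k with
   G = S_1^{-1} H S_2^{-T}); they are characterized (uniquely, when w is
   quasidefinite) by monicity and <P^{[1]}_n, P^{[2]}_m>_w = delta_{n,m} H_n. *)
Definition is_MOP (w : gkernel) (P1 P2 : nat -> mpoly) (H : nat -> 'M[C]_p)
  : Prop :=
  (forall n, monic_mpoly n (P1 n) /\ monic_mpoly n (P2 n)) /\
  (forall n m, sform w (P1 n) (P2 m) = if n == m then H n else 0).

Definition mx_eval (z : C) (P : mpoly) : 'M[C]_p := map_mx (horner^~ z) P.
Definition mx_const (A : 'M[C]_p) : mpoly := map_mx polyC A.

Definition CD_zy (P1 P2 : nat -> mpoly) (H : nat -> 'M[C]_p) (n : nat) (z : C)
  : mpoly :=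
  \sum_(k < n.+1) ((P2 k)^T *m mx_const (invmx (H k) *m mx_eval z (P1 k))).

Definition CD_xz (P1 P2 : nat -> mpoly) (H : nat -> 'M[C]_p) (n : nat) (z : C)
  : mpoly :=
  \sum_(k < n.+1) (mx_const ((mx_eval z (P2 k))^T *m invmx (H k)) *m P1 k).

End Defs.

(* Main.v *)
Require Import Defs.
From HB Require Import structures.
From mathcomp Require Import all_boot all_order all_algebra.
From mathcomp Require Import reals complex.
Import Order.TTheory GRing.Theory Num.Theory.
Local Open Scope ring_scope.
Set Implicit Arguments. Unset Strict Implicit.

Lemma trmx_sumE (T : nmodType) m n k (F : 'I_k -> 'M[T]_(m,n)) :
  (\sum_i F i)^T = \sum_i (F i)^T.
Proof.
by apply/matrixP => i j; rewrite !mxE !summxE; apply: eq_bigr => l _; rewrite mxE.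
Qed.
Lemma trmxDE (T : nmodType) m n (A B : 'M[T]_(m,n)) : (A + B)^T = A^T + B^T.
Proof. by apply/matrixP => i j; rewrite !mxE. Qed.
Lemma trmxBE (T : zmodType) m n (A B : 'M[T]_(m,n)) : (A - B)^T = A^T - B^T.
Proof. by apply/matrixP => i j; rewrite !mxE. Qed.

Section Aux.
Variables (R : realType) (p : nat).
Local Notation C := (R[i]).
Local Notation M := ('M[R[i]]_p).
Local Notation mp := (mpoly R p).

Definition coefm (P : mp) (a : nat) : M := \matrix_(i, k) (P i k)`_a.
Definition bnd (P : mp) (N : nat) := forall a, (N <= a)%N -> coefm P a = 0.

Lemma monic_hi n (P : mp) : monic_mpoly n P -> forall a, (n < a)%N -> coefm P a = 0.
Proof.
move=> hP a ha; apply/matrixP=> i j; rewrite !mxE.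
have := (leq_sizeP _ _ (hP i j)) a (ltnW ha).
by rewrite coefB coefZ coefXn (gtn_eqF ha) mulr0 subr0.
Qed.

Lemma monic_bnd n (P : mp) : monic_mpoly n P -> bnd P n.+1.
Proof. by move=> hP a ha; apply: monic_hi hP a ha. Qed.

Lemma monic_n n (P : mp) : monic_mpoly n P -> coefm P n = 1%:M.
Proof.
move=> hP; apply/matrixP=> i j; rewrite !mxE.
have := (leq_sizeP _ _ (hP i j)) n (leqnn n).
rewrite coefB coefZ coefXn eqxx mulr1 => /eqP; rewrite subr_eq0 => /eqP ->.
by case: (i == j).
Qed.

Lemma bnd_mono (P : mp) N N' : (N <= N')%N -> bnd P N -> bnd P N'.
Proof. by move=> hN hP a ha; apply: hP; apply: leq_trans ha. Qed.

Lemma bnd_exists (P : mp) : exists N, bnd P N.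
Proof.
exists (\max_(ik : 'I_p * 'I_p) size (P ik.1 ik.2))%N => a ha.
apply/matrixP=> i k; rewrite !mxE; apply: nth_default.
apply: leq_trans ha; have := @leq_bigmax _ (fun ik : 'I_p * 'I_p => size (P ik.1 ik.2)) (i, k); exact.
Qed.

Lemma bnd_size {P : mp} {N} (i k : 'I_p) : bnd P N -> (size (P i k) <= N)%N.
Proof.
move=> hP; apply/leq_sizeP => j hj.
by have := congr1 (fun A : M => A i k) (hP j hj); rewrite !mxE.
Qed.

Lemma widen_gen (V : nmodType) n N (F : nat -> V) :
  (n <= N)%N -> (forall a, (n <= a)%N -> F a = 0) ->
  \sum_(a < n) F a = \sum_(a < N) F a.
Proof.
move=> hq hF; rewrite (big_ord_widen N F hq) big_mkcond /=.
apply: eq_bigr => a _; case: ifP => // /negbT; rewrite -leqNgt => ha.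
by rewrite hF.
Qed.

Lemma sum_widen (q : {poly C}) N (F : nat -> C) :
  (size q <= N)%N -> (forall a, (size q <= a)%N -> F a = 0) ->
  \sum_(a < size q) F a = \sum_(a < N) F a.
Proof.
move=> hq hF; rewrite (big_ord_widen N F hq) big_mkcond /=.
apply: eq_bigr => a _; case: ifP => // /negbT; rewrite -leqNgt => ha.
by rewrite hF.
Qed.

Lemma sformE w (P Q : mp) N : bnd P N -> bnd Q N ->
  sform w P Q = \sum_(a < N) \sum_(b < N) coefm P a *m w a b *m (coefm Q b)^T.
Proof.
move=> hP hQ; apply/matrixP=> i j; rewrite !mxE summxE.
under [RHS]eq_bigr do rewrite summxE.
transitivity (\sum_(k < p) \sum_(l < p) \sum_(a < N) \sum_(b < N)
   (P i k)`_a * (Q j l)`_b * w a b k l).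
  apply: eq_bigr => k _; apply: eq_bigr => l _.
  rewrite (@sum_widen _ N (fun a => \sum_(b < size (Q j l)) (P i k)`_a * (Q j l)`_b * w a b k l) (bnd_size i k hP)); last first.
    by move=> a ha; apply: big1 => b _; rewrite nth_default // !mul0r.
  apply: eq_bigr => a _.
  rewrite (@sum_widen _ N (fun b => (P i k)`_a * (Q j l)`_b * w a b k l) (bnd_size j l hQ)) //.
  by move=> b hb; rewrite [(Q j l)`_b]nth_default // mulr0 mul0r.
under [RHS]eq_bigr => a _ do under eq_bigr => b _ do
  (rewrite !mxE; under eq_bigr => l _ do rewrite !mxE mulr_suml).
under [LHS]eq_bigr => k _ do rewrite exchange_big.
rewrite [LHS]exchange_big.
under [LHS]eq_bigr => a _ do under eq_bigr => k _ do rewrite exchange_big.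
under [LHS]eq_bigr => a _ do rewrite exchange_big.
under [LHS]eq_bigr => a _ do under eq_bigr => b _ do rewrite exchange_big.
apply: eq_bigr => a _; apply: eq_bigr => b _; apply: eq_bigr => l _; apply: eq_bigr => k _.
by rewrite !mxE mulrAC.
Qed.
Arguments sformE w {P Q N}.

Lemma coefmD (P Q : mp) a : coefm (P + Q) a = coefm P a + coefm Q a.
Proof. by apply/matrixP=> i k; rewrite !mxE coefD. Qed.
Lemma coefmN (P : mp) a : coefm (- P) a = - coefm P a.
Proof. by apply/matrixP=> i k; rewrite !mxE coefN. Qed.
Lemma coefmB (P Q : mp) a : coefm (P - Q) a = coefm P a - coefm Q a.
Proof. by rewrite coefmD coefmN. Qed.
Lemma coefm0 a : coefm 0 a = 0.
Proof. by apply/matrixP=> i k; rewrite !mxE coef0. Qed.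
Lemma coefm_cl (A : M) (P : mp) a : coefm (mx_const A *m P) a = A *m coefm P a.
Proof.
apply/matrixP=> i k; rewrite !mxE coef_sum; apply: eq_bigr => m _.
by rewrite !mxE coefCM.
Qed.

Lemma bndD (P Q : mp) N : bnd P N -> bnd Q N -> bnd (P + Q) N.
Proof. by move=> hP hQ a ha; rewrite coefmD hP // hQ // addr0. Qed.
Lemma bndN (P : mp) N : bnd P N -> bnd (- P) N.
Proof. by move=> hP a ha; rewrite coefmN hP // oppr0. Qed.
Lemma bndB (P Q : mp) N : bnd P N -> bnd Q N -> bnd (P - Q) N.
Proof. by move=> hP hQ; apply: bndD => //; apply: bndN. Qed.
Lemma bnd0 N : bnd 0 N.
Proof. by move=> a _; rewrite coefm0. Qed.
Lemma bnd_cl (A : M) (P : mp) N : bnd P N -> bnd (mx_const A *m P) N.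
Proof. by move=> hP a ha; rewrite coefm_cl hP // mulmx0. Qed.
Lemma bnd_sum n (F : 'I_n -> mp) N : (forall k, bnd (F k) N) -> bnd (\sum_k F k) N.
Proof.
move=> hF; elim/big_ind: _ => //; [exact: bnd0 | by move=> ? ? ? ?; apply: bndD].
Qed.

Lemma bnd3 (P Q T : mp) : exists N, [/\ bnd P N, bnd Q N & bnd T N].
Proof.
have [N1 h1] := bnd_exists P; have [N2 h2] := bnd_exists Q.
have [N3 h3] := bnd_exists T; exists (N1 + N2 + N3)%N; split.
- by apply: bnd_mono h1; rewrite -addnA leq_addr.
- by apply: bnd_mono h2; rewrite addnAC leq_addl.
- by apply: bnd_mono h3; rewrite leq_addl.
Qed.

Lemma sformDl w (P P' Q : mp) : sform w (P + P') Q = sform w P Q + sform w P' Q.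
Proof.
have [N [h1 h2 h3]] := bnd3 P P' Q.
rewrite (sformE w (bndD h1 h2) h3) (sformE w h1 h3) (sformE w h2 h3).
rewrite -big_split; apply: eq_bigr => a _; rewrite -big_split; apply: eq_bigr => b _.
by rewrite coefmD !mulmxDl.
Qed.

Lemma sformNl w (P Q : mp) : sform w (- P) Q = - sform w P Q.
Proof.
have [N [h1 h2 h3]] := bnd3 P P Q.
rewrite (sformE w (bndN h1) h3) (sformE w h1 h3).
rewrite -sumrN; apply: eq_bigr => a _; rewrite -sumrN; apply: eq_bigr => b _.
by rewrite coefmN !mulNmx.
Qed.

Lemma sformBl w (P P' Q : mp) : sform w (P - P') Q = sform w P Q - sform w P' Q.
Proof. by rewrite sformDl sformNl. Qed.

Lemma sformZl w (A : M) (P Q : mp) : sform w (mx_const A *m P) Q = A *m sform w P Q.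
Proof.
have [N [h1 h2 h3]] := bnd3 P P Q.
rewrite (sformE w (bnd_cl A h1) h3) (sformE w h1 h3).
rewrite mulmx_sumr; apply: eq_bigr => a _; rewrite mulmx_sumr; apply: eq_bigr => b _.
by rewrite coefm_cl !mulmxA.
Qed.

Lemma sformDr w (P Q Q' : mp) : sform w P (Q + Q') = sform w P Q + sform w P Q'.
Proof.
have [N [h1 h2 h3]] := bnd3 Q Q' P.
rewrite (sformE w h3 (bndD h1 h2)) (sformE w h3 h1) (sformE w h3 h2).
rewrite -big_split; apply: eq_bigr => a _; rewrite -big_split; apply: eq_bigr => b _.
by rewrite coefmD linearD /= !mulmxDr.
Qed.

Lemma sformNr w (P Q : mp) : sform w P (- Q) = - sform w P Q.
Proof.
have [N [h1 h2 h3]] := bnd3 Q Q P.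
rewrite (sformE w h3 (bndN h1)) (sformE w h3 h1).
rewrite -sumrN; apply: eq_bigr => a _; rewrite -sumrN; apply: eq_bigr => b _.
by rewrite coefmN linearN /= mulmxN.
Qed.

Lemma sformBr w (P Q Q' : mp) : sform w P (Q - Q') = sform w P Q - sform w P Q'.
Proof. by rewrite sformDr sformNr. Qed.

Lemma sformZr w (A : M) (P Q : mp) : sform w P (mx_const A *m Q) = sform w P Q *m A^T.
Proof.
have [N [h1 h2 h3]] := bnd3 Q Q P.
rewrite (sformE w h3 (bnd_cl A h1)) (sformE w h3 h1).
rewrite mulmx_suml; apply: eq_bigr => a _; rewrite mulmx_suml; apply: eq_bigr => b _.
by rewrite coefm_cl trmx_mul !mulmxA.
Qed.

Lemma sform0l w (Q : mp) : sform w 0 Q = 0.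
Proof. by rewrite -(subrr (0 : mp)) sformBl subrr. Qed.
Lemma sform0r w (Q : mp) : sform w Q 0 = 0.
Proof. by rewrite -(subrr (0 : mp)) sformBr subrr. Qed.

Lemma sform_suml w n (F : 'I_n -> mp) Q :
  sform w (\sum_k F k) Q = \sum_k sform w (F k) Q.
Proof.
elim: n F => [|n IH] F; first by rewrite !big_ord0 sform0l.
by rewrite !big_ord_recr /= sformDl IH.
Qed.

Lemma sform_sumr w n (F : 'I_n -> mp) Q :
  sform w Q (\sum_k F k) = \sum_k sform w Q (F k).
Proof.
elim: n F => [|n IH] F; first by rewrite !big_ord0 sform0r.
by rewrite !big_ord_recr /= sformDr IH.
Qed.

Definition Xm (b : nat) : mp := \matrix_(i, j) ((i == j)%:R *: 'X^b).

Lemma coefm_Xm b c : coefm (Xm b) c = if c == b then 1%:M else 0.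
Proof.
apply/matrixP=> i j; rewrite !mxE coefZ coefXn.
case: (c == b); rewrite ?mxE ?mulr1 ?mulr0 //.
Qed.

Lemma bnd_Xm b : bnd (Xm b) b.+1.
Proof. by move=> c hc; rewrite coefm_Xm (gtn_eqF hc). Qed.

Lemma sformE_R w (P Q : mp) N : bnd P N -> bnd Q N ->
  sform w P Q = \sum_(b < N) (\sum_(a < N) coefm P a *m w a b) *m (coefm Q b)^T.
Proof.
move=> hP hQ; rewrite (sformE w hP hQ) exchange_big; apply: eq_bigr => b _.
by rewrite mulmx_suml.
Qed.

Lemma gRE w (P : mp) N b : bnd P N -> (b < N)%N ->
  sform w P (Xm b) = \sum_(a < N) coefm P a *m w a b.
Proof.
move=> hP hb; rewrite (sformE_R w hP (bnd_mono hb (@bnd_Xm b))).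
rewrite (bigD1 (Ordinal hb)) //= coefm_Xm eqxx trmx1 mulmx1.
rewrite [X in _ + X = _]big1 ?addr0 //.
move=> c hc; rewrite coefm_Xm.
have -> : (nat_of_ord c == b) = false.
  by apply/negbTE; move: hc; apply: contra => /eqP h; apply/eqP/val_inj.
by rewrite trmx0 mulmx0.
Qed.

Lemma sform_gR w (P Q : mp) N : bnd Q N ->
  sform w P Q = \sum_(b < N) sform w P (Xm b) *m (coefm Q b)^T.
Proof.
move=> hQ; have [NP hP] := bnd_exists P.
have hP' : bnd P (NP + N) by apply: bnd_mono hP; apply: leq_addr.
have hQ' : bnd Q (NP + N) by apply: bnd_mono hQ; apply: leq_addl.
rewrite (sformE_R w hP' hQ').
rewrite (@widen_gen _ N (NP + N) (fun b => sform w P (Xm b) *m (coefm Q b)^T)).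
- by apply: eq_bigr => b _; rewrite (gRE w hP').
- exact: leq_addl.
- by move=> b hb; rewrite hQ // trmx0 mulmx0.
Qed.

Definition kT (w : gkernel R p) : gkernel R p := fun a b => (w b a)^T.

Lemma sform_tr w (P Q : mp) : sform (kT w) P Q = (sform w Q P)^T.
Proof.
have [N [h1 h2 _]] := bnd3 P Q P.
rewrite (sformE _ h1 h2) (sformE w h2 h1) exchange_big linear_sum /=.
apply: eq_bigr => a _; rewrite linear_sum /=; apply: eq_bigr => b _.
by rewrite !trmx_mul trmxK mulmxA.
Qed.

Lemma kT_MOP w P1 P2 H : is_MOP w P1 P2 H -> is_MOP (kT w) P2 P1 (fun n => (H n)^T).
Proof.
move=> [hm ho]; split; first by move=> n; have [? ?] := hm n.
move=> n m; rewrite sform_tr ho eq_sym; case: eqP => [->|_] //.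
by rewrite trmx0.
Qed.

Lemma kT_qd w : quasidefinite w -> quasidefinite (kT w).
Proof. by move=> hw k; rewrite /gram_trunc -tr_mxblock det_tr; apply: hw. Qed.

Lemma orthR w P1 P2 H (Q : mp) n : is_MOP w P1 P2 H ->
  (forall m, (m < n)%N -> sform w Q (P2 m) = 0) ->
  forall b, (b < n)%N -> sform w Q (Xm b) = 0.
Proof.
move=> [hm ho] hQ b; elim/ltn_ind: b => b IH hb.
have := hQ b hb; have [_ h2] := hm b.
rewrite (sform_gR w Q (monic_bnd h2)) big_ord_recr /= (monic_n h2) trmx1 mulmx1.
rewrite big1 ?add0r // => c _; rewrite IH ?mul0mx //.
exact: ltn_trans (ltn_ord c) hb.
Qed.

Lemma zeroR w (Q T : mp) N : (forall b, (b < N)%N -> sform w Q (Xm b) = 0) ->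
  bnd T N -> sform w Q T = 0.
Proof.
by move=> hQ hT; rewrite (sform_gR w Q hT) big1 // => b _; rewrite hQ // mul0mx.
Qed.

Lemma orthL w P1 P2 H (Q : mp) n : is_MOP w P1 P2 H ->
  (forall m, (m < n)%N -> sform w (P1 m) Q = 0) ->
  forall a, (a < n)%N -> sform w (Xm a) Q = 0.
Proof.
move=> hM hQ a ha.
have h := orthR (Q := Q) (n := n) (kT_MOP hM).
have {h} := h _ a ha; rewrite sform_tr => h.
rewrite -[LHS]trmxK h; first exact: trmx0.
by move=> m hm; rewrite sform_tr hQ // trmx0.
Qed.

Lemma zeroL w (Q T : mp) N : (forall a, (a < N)%N -> sform w (Xm a) Q = 0) ->
  bnd T N -> sform w T Q = 0.
Proof.
move=> hQ hT; rewrite -[LHS]trmxK -sform_tr (zeroR (T := T) (N := N)) ?trmx0 //.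
by move=> b hb; rewrite sform_tr hQ // trmx0.
Qed.

Lemma nondeg w (D : mp) n : quasidefinite w -> bnd D n ->
  (forall b, (b < n)%N -> sform w D (Xm b) = 0) -> D = 0.
Proof.
move=> hw hD hg.
pose X := \mxrow_(a < n) coefm D a.
have hX : X *m gram_trunc w n = 0.
  rewrite /X /gram_trunc mul_mxrow_mxblock -mxrow0; apply: eq_mxrow => b.
  by rewrite -(gRE w hD (ltn_ord b)) hg.
have hu : gram_trunc w n \in unitmx by rewrite unitmxE unitfE hw.
have hX0 : X = 0 by rewrite -(mulmxK hu X) hX mul0mx.
apply/matrixP => i k; apply/polyP => c; rewrite !mxE coef0.
case: (ltnP c n) => hc.
  have := congr1 (fun A => submxrow A (Ordinal hc)) hX0.
  by rewrite mxrowK submxrow0 => /matrixP/(_ i k); rewrite !mxE.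
by have := congr1 (fun A : M => A i k) (hD c hc); rewrite !mxE.
Qed.

Lemma Hunit (w : gkernel R p) (P1 P2 : nat -> mp) (H : nat -> M) : quasidefinite w -> is_MOP w P1 P2 H -> forall k, H k \in unitmx.
Proof.
move=> hw hM k; have [hm ho] := hM.
rewrite -row_free_unit -kermx_eq0.
have [h1 _] := hm k.
have hQ : mx_const (kermx (H k)) *m P1 k = 0.
  apply: (nondeg (n := k.+1) hw); first exact: bnd_cl (monic_bnd h1).
  apply: (orthR hM) => m hm'; rewrite sformZl ho.
  by case: (k == m); [exact: mulmx_ker | exact: mulmx0].
have := congr1 (fun P => coefm P k) hQ.
by rewrite coefm_cl (monic_n h1) mulmx1 coefm0 => ->.
Qed.

Lemma monic_diff n (P Q : mp) : monic_mpoly n P -> monic_mpoly n Q -> bnd (P - Q) n.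
Proof.
move=> hP hQ a; rewrite leq_eqVlt => /orP [/eqP <-|ha].
  by rewrite coefmB (monic_n hP) (monic_n hQ) subrr.
by rewrite coefmB (monic_hi hP ha) (monic_hi hQ ha) subrr.
Qed.

Lemma mx_evalD z (P Q : mp) : mx_eval z (P + Q) = mx_eval z P + mx_eval z Q.
Proof. by apply/matrixP=> i j; rewrite !mxE hornerD. Qed.
Lemma mx_evalN z (P : mp) : mx_eval z (- P) = - mx_eval z P.
Proof. by apply/matrixP=> i j; rewrite !mxE hornerN. Qed.
Lemma mx_evalB z (P Q : mp) : mx_eval z (P - Q) = mx_eval z P - mx_eval z Q.
Proof. by rewrite mx_evalD mx_evalN. Qed.
Lemma mx_eval0 z : mx_eval z (0 : mp) = 0.
Proof. by apply/matrixP=> i j; rewrite !mxE horner0. Qed.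
Lemma mx_eval_sum z n (F : 'I_n -> mp) : mx_eval z (\sum_k F k) = \sum_k mx_eval z (F k).
Proof.
elim: n F => [|n IH] F; first by rewrite !big_ord0 mx_eval0.
by rewrite !big_ord_recr /= mx_evalD IH.
Qed.
Lemma mx_eval_cl z (A : M) (P : mp) : mx_eval z (mx_const A *m P) = A *m mx_eval z P.
Proof.
apply/matrixP=> i j; rewrite !mxE horner_sum; apply: eq_bigr => k _.
by rewrite !mxE hornerCM.
Qed.

Lemma core (u v uh : gkernel R p) (P1 P2 : nat -> mp) (H : nat -> M)
  (Ph1 Ph2 : nat -> mp) (Hh : nat -> M) :
  (forall P Q, sform uh P Q = sform u P Q + sform v P Q) ->
  quasidefinite u -> is_MOP u P1 P2 H -> is_MOP uh Ph1 Ph2 Hh ->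
  forall n z,
  mx_eval z (Ph1 n) = mx_eval z (P1 n) -
     \sum_(k < n) sform v (Ph1 n) (P2 k) *m (invmx (H k) *m mx_eval z (P1 k))
  /\ Hh n = H n + sform v (Ph1 n) (P2 n).
Proof.
move=> hadd hu hM hMh n z.
have [hm ho] := hM; have [hmh hoh] := hMh.
have [m1 m2] := hm n; have [mh1 mh2] := hmh n.
have oPh : forall b, (b < n)%N -> sform uh (Ph1 n) (Xm b) = 0.
  by apply: (orthR hMh) => m hmn; rewrite hoh (gtn_eqF hmn).
have oP2 : forall a, (a < n)%N -> sform u (Xm a) (P2 n) = 0.
  by apply: (orthL hM) => m hmn; rewrite ho (ltn_eqF hmn).
split.
  pose S := \sum_(k < n) mx_const (sform v (Ph1 n) (P2 k) *m invmx (H k)) *m P1 k.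
  have hD : Ph1 n - P1 n + S = 0.
    apply: (nondeg (n := n) hu).
      apply: bndD; first exact: monic_diff mh1 m1.
      apply: bnd_sum => k; apply: bnd_cl; apply: bnd_mono (monic_bnd (hm k).1).
      exact: ltn_ord.
    apply: (orthR hM) => m hmn.
    rewrite sformDl sformBl sform_suml (bigD1 (Ordinal hmn)) //= sformZl (ho m m) eqxx.
    rewrite [X in _ + (_ + X)]big1; last first.
      move=> k hk; rewrite sformZl ho.
      have -> : (nat_of_ord k == m) = false.
        by apply/negbTE; move: hk; apply: contra => /eqP h; apply/eqP/val_inj.
      exact: mulmx0.
    rewrite ho (gtn_eqF hmn) subr0 addr0 -mulmxA mulVmx ?mulmx1; last exact: (Hunit hu hM).
    rewrite -hadd; apply: (zeroR oPh).
    exact: bnd_mono hmn (monic_bnd (hm m).2).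
  have eP : Ph1 n = P1 n - S.
    by apply/eqP; rewrite -subr_eq0; apply/eqP; rewrite -hD opprB addrA addrAC.
  rewrite {1}eP mx_evalB mx_eval_sum; congr (_ - _); apply: eq_bigr => k _.
  by rewrite mx_eval_cl mulmxA.
have e1 : sform uh (Ph1 n) (Ph2 n) = sform uh (Ph1 n) (P2 n).
  by apply/eqP; rewrite -subr_eq0 -sformBr (zeroR oPh (monic_diff mh2 m2)).
have e2 : sform u (Ph1 n) (P2 n) = sform u (P1 n) (P2 n).
  by apply/eqP; rewrite -subr_eq0 -sformBl (zeroL oP2 (monic_diff mh1 m1)).
by move: (hoh n n); rewrite eqxx => <-; rewrite e1 hadd e2 ho eqxx.
Qed.

Lemma K1 (v : gkernel R p) (P1 P2 : nat -> mp) (H : nat -> M) (Q : mp) n z :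
  sform v Q (if n is n'.+1 then CD_zy P1 P2 H n' z else 0)^T =
  \sum_(k < n) sform v Q (P2 k) *m (invmx (H k) *m mx_eval z (P1 k)).
Proof.
case: n => [|n'] /=; first by rewrite big_ord0 trmx0 sform0r.
rewrite /CD_zy trmx_sumE sform_sumr; apply: eq_bigr => k _.
by rewrite trmx_mul /mx_const map_trmx trmxK sformZr trmxK.
Qed.

Lemma K2 (v : gkernel R p) (P1 P2 : nat -> mp) (H : nat -> M) (Q : mp) n z :
  sform v (if n is n'.+1 then CD_xz P1 P2 H n' z else 0) Q =
  \sum_(k < n) (mx_eval z (P2 k))^T *m invmx (H k) *m sform v (P1 k) Q.
Proof.
case: n => [|n'] /=; first by rewrite big_ord0 sform0l.
rewrite /CD_xz sform_suml; apply: eq_bigr => k _.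
by rewrite sformZl.
Qed.

Lemma hadd_lem (u v : gkernel R p) (P Q : mp) :
  sform (gkernel_add u v) P Q = sform u P Q + sform v P Q.
Proof.
have [N [h1 h2 _]] := bnd3 P Q P.
rewrite (sformE _ h1 h2) (sformE u h1 h2) (sformE v h1 h2) -big_split.
apply: eq_bigr => a _; rewrite -big_split; apply: eq_bigr => b _.
by rewrite /gkernel_add mulmxDr mulmxDl.
Qed.
End Aux.

Unset Implicit Arguments.

Theorem mainTheorem3 (R : realType) (p : nat) (hp : (1 <= p)%N)
  (u v : gkernel R p)
  (P1 P2 : nat -> mpoly R p) (H : nat -> 'M[R[i]]_p)
  (Ph1 Ph2 : nat -> mpoly R p) (Hh : nat -> 'M[R[i]]_p) :
  quasidefinite u ->
  quasidefinite (gkernel_add u v) ->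
  is_MOP u P1 P2 H ->
  is_MOP (gkernel_add u v) Ph1 Ph2 Hh ->
  forall (n : nat) (z : R[i]),
    (* K_{n-1}(z,y) and K_{n-1}(x,z), with K_{-1} := 0 *)
    let Kzy := if n is n'.+1 then CD_zy P1 P2 H n' z else 0 in
    let Kxz := if n is n'.+1 then CD_xz P1 P2 H n' z else 0 in
    [/\ mx_eval z (Ph1 n) = mx_eval z (P1 n) - sform v (Ph1 n) Kzy^T,
        (mx_eval z (Ph2 n))^T = (mx_eval z (P2 n))^T - sform v Kxz (Ph2 n),
        Hh n = H n + sform v (Ph1 n) (P2 n)
      & Hh n = H n + sform v (P1 n) (Ph2 n)].
Proof.
move=> hu _ hM hMh n z Kzy Kxz; rewrite /Kzy /Kxz {Kzy Kxz}.
have hadd := hadd_lem u v.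
have haddT : forall P Q, sform (kT (gkernel_add u v)) P Q =
    sform (kT u) P Q + sform (kT v) P Q.
  by move=> P Q; rewrite !sform_tr hadd trmxDE.
have [c1 c3] := core hadd hu hM hMh n z.
have [c2 c4] := core haddT (kT_qd hu) (kT_MOP hM) (kT_MOP hMh) n z.
have e2 : (mx_eval z (Ph2 n))^T = (mx_eval z (P2 n))^T -
   sform v (if n is n'.+1 then CD_xz P1 P2 H n' z else 0) (Ph2 n).
  rewrite c2 K2 trmxBE trmx_sumE; congr (_ - _); apply: eq_bigr => k _ /=.
  rewrite !trmx_mul sform_tr trmxK trmx_inv trmxK. done.
have e4 : Hh n = H n + sform v (P1 n) (Ph2 n).
  apply: trmx_inj; rewrite c4 sform_tr trmxDE.
  done.
split.
- rewrite (K1 v P1 P2 H (Ph1 n) n z).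
  exact_no_check c1.
- exact_no_check e2.
- exact_no_check c3.
- exact_no_check e4.
Qed.
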